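(* Consider an execution of the MBBA protocol (described in the context) in which fewer than $n/3$ of the $n$ players are malicious. If, at some step, an honest player $i$ sets $f_{i,c}=1$ for some component $c\in\{1,\dots,m\}$, then $c$-agreement holds at the end of that step.
   Context: Network model: $n$ players; every pair is joined by a direct private channel; synchronous steps, instantaneous delivery. Fewer than $n/3$ players are malicious (arbitrary behaviour); honest players follow the protocol and send the same message to every player. For player $i$, step $s$, component $c$ and value $v$, $\#_i^s(v,c)$ is the number of distinct players from which $i$ received in step $s$ a valid vector message whose $c$-th component is $v$ (counting $i$'s own); conflicting messages from one sender in one step are both discarded, duplicates count once. $c$-agreement holds (at a given moment) if there is a value $v$ such that the $c$-th component $b_{j,c}$ of every honest player $j$'s current vector equals $v$. Protocol MBBA: $H$ is a hash function modeled as a random oracle (outputs ordered lexicographically); $\mathrm{SIG}_i$ is a unique-signature scheme with publicly known keys; $r$ a common random string; counter $\gamma$ starts at 0. Player $i$ holds $\mathbf{b}_i\in\{0,1\}^m$ and $\mathbf{f}_i$, initially all zeros. EXIT CHECK: if $\mathbf{f}_i$ is all ones, $i$ sends $\mathbf{b}_i$ marked final (treated by receivers as $i$'s message in all later steps), outputs $\mathbf{b}_i$ and halts. STEP 1: $i$ sends $\mathbf{b}_i$; for each $c$ with $f_{i,c}=0$: if $\#_i^1(0,c)>\frac23 n$, set $b_{i,c}=0$, $f_{i,c}=1$, perform EXIT CHECK; else if $\#_i^1(1,c)>\frac23n$, set $b_{i,c}=1$; else $b_{i,c}=0$. STEP 2: $i$ sends $\mathbf{b}_i$; for each $c$ with $f_{i,c}=0$: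 if $\#_i^2(1,c)>\frac23 n$, set $b_{i,c}=1$, $f_{i,c}=1$, perform EXIT CHECK; else if $\#_i^2(0,c)>\frac23n$, set $b_{i,c}=0$; else $b_{i,c}=1$. STEP 3: $i$ sends $s_i=\mathrm{SIG}_i(r\|\gamma)$ and $\mathbf{b}_i$; for each $c$ with $f_{i,c}=0$: if $\#_i^3(0,c)>\frac23n$, $b_{i,c}=0$; else if $\#_i^3(1,c)>\frac23n$, $b_{i,c}=1$; else $b_{i,c}=k_c$, the $c$-th bit of $k=H(\min_{j\in P_i}H(s_j))$ where $P_i$ is the set of players who sent $i$ a valid STEP 3 message. Then $\gamma\leftarrow\gamma+1$ and return to STEP 1. *)

(* Defs.v *)
From mathcomp Require Import all_boot.
Set Implicit Arguments. Unset Strict Implicit. Unset Printing Implicit Defensive.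

(* Players are 'I_n, components are 'I_m (0-based), vectors are 'I_m -> bool.
   Global step counter t : nat; the protocol step executed at time t is
   STEP 1 if t %% 3 = 0, STEP 2 if t %% 3 = 1, STEP 3 if t %% 3 = 2.
   State (b t j, f t j) is player j's state at the beginning of time t
   (= end of time t.-1). *)

(* #_i^s(v,c): number of distinct senders whose (valid, non-conflicting)
   message received by i has c-th component v.  msg j = None means that
   nothing valid (or conflicting messages, discarded) was received from j. *)
Definition count_recv (n m : nat) (msg : 'I_n -> option ('I_m -> bool))
    (c : 'I_m) (v : bool) : nat :=
  #|[set j : 'I_n | if msg j is Some w then w c == v else false]|.

Definition supermaj (n k : nat) : bool := 2 * n < 3 * k.

(* Update of the pair (b_{i,c}, f_{i,c}) by an honest player at time t,
   given the counting function cnt v = #_i^s(v,c) and the common-coin bit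
   k_c used in STEP 3. Components with f_{i,c} = 1 are not touched
   (this also covers halted players, whose state never changes). *)
Definition mbba_update (t n : nat) (cnt : bool -> nat) (coin : bool)
    (b f : bool) : bool * bool :=
  if f then (b, f) else
  match t %% 3 with
  | 0 => if supermaj n (cnt false) then (false, true)
         else if supermaj n (cnt true) then (true, false)
         else (false, false)
  | 1 => if supermaj n (cnt true) then (true, true)
         else if supermaj n (cnt false) then (false, false)
         else (true, false)
  | _ => (if supermaj n (cnt false) then false
          else if supermaj n (cnt true) then true
          else coin, false)
  end.

(* An execution of MBBA with honest set [honest]:
   - f starts all zeros (b 0 is the arbitrary input vector);
   - every honest sender j delivers its current vector b t j to every player
     (a halted player's final message is its fixed vector, which is again
     b t j); malicious senders' deliveries recv t i j are arbitrary;
   - every honest player updates according to MBBA; coin t i is the coin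
     vector k used by i at time t (only relevant in STEP 3), left arbitrary. *)
Definition mbba_execution (n m : nat) (honest : {set 'I_n})
    (b f : nat -> 'I_n -> 'I_m -> bool)
    (recv : nat -> 'I_n -> 'I_n -> option ('I_m -> bool))
    (coin : nat -> 'I_n -> 'I_m -> bool) : Prop :=
  [/\ forall j c, f 0 j c = false,
      forall t i j, i \in honest -> j \in honest -> recv t i j = Some (b t j)
    & forall t i c, i \in honest ->
        (b t.+1 i c, f t.+1 i c) =
        mbba_update t n (count_recv (recv t i) c) (coin t i c)
                    (b t i c) (f t i c)].

Definition c_agreement (n m : nat) (honest : {set 'I_n})
    (b : nat -> 'I_n -> 'I_m -> bool) (t : nat) (c : 'I_m) : Prop :=
  exists v : bool, forall j, j \in honest -> b t j c = v.

(* Main.v *)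
Require Import Defs.
From mathcomp Require Import all_boot.
From mathcomp Require Import zify.

Lemma cnt_ub n m (honest : {set 'I_n}) (msg : 'I_n -> option ('I_m -> bool))
  (bt : 'I_n -> 'I_m -> bool) c v :
  (forall j, j \in honest -> msg j = Some (bt j)) ->
  count_recv msg c v <= #|[set j in honest | bt j c == v]| + #|~: honest|.
Proof.
move=> H; rewrite /count_recv.
apply: leq_trans (leq_card_setU _ _); apply: subset_leq_card; apply/subsetP => j.
rewrite !inE.
case: (boolP (j \in honest)) => hj /=; last by [].
by rewrite H // orbF.
Qed.

Lemma cnt_lb n m (honest : {set 'I_n}) (msg : 'I_n -> option ('I_m -> bool))
  (bt : 'I_n -> 'I_m -> bool) c v :
  (forall j, j \in honest -> msg j = Some (bt j)) ->
  #|[set j in honest | bt j c == v]| <= count_recv msg c v.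
Proof.
move=> H; rewrite /count_recv; apply: subset_leq_card; apply/subsetP => j.
rewrite !inE => /andP[hj e]. by rewrite H.
Qed.

Lemma split_honest n m (honest : {set 'I_n}) (bt : 'I_n -> 'I_m -> bool) c w :
  #|[set j in honest | bt j c == w]| + #|[set j in honest | bt j c == ~~ w]|
  = #|honest|.
Proof.
rewrite -(cardsID [set j | bt j c == w] honest); congr (_ + _);
apply: eq_card => j; rewrite !inE; case: (bt j c); case: w; by rewrite ?andbT ?andbF.
Qed.

Lemma card_honest n (honest : {set 'I_n}) : #|honest| + #|~: honest| = n.
Proof. by rewrite cardsC card_ord. Qed.

Theorem lemma1 (n m : nat) (honest : {set 'I_n})
    (b f : nat -> 'I_n -> 'I_m -> bool)
    (recv : nat -> 'I_n -> 'I_n -> option ('I_m -> bool))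
    (coin : nat -> 'I_n -> 'I_m -> bool) :
  3 * #|~: honest| < n ->
  mbba_execution honest b f recv coin ->
  forall (t : nat) (i : 'I_n) (c : 'I_m),
    i \in honest -> f t i c = false -> f t.+1 i c = true ->
    c_agreement honest b t.+1 c.
Proof.
move=> Hmal [f0 hrecv hupd].
have hch := @card_honest n honest.
have key : forall t c,
  (forall j, j \in honest -> f t j c -> forall k, k \in honest -> b t k c = b t j c) ->
  forall i, i \in honest -> f t.+1 i c -> c_agreement honest b t.+1 c.
  move=> t c P i hi fi1.
  case: (boolP [exists j, (j \in honest) && f t j c]).
  - case/existsP => j /andP[hj fj].
    exists (b t j c) => k hk.
    have Hall := P j hj fj.
    set v := b t j c in Hall *.
    have eqv : [set j0 in honest | b t j0 c == v] = honest.
      by apply/setP => x; rewrite !inE; case: (boolP (x \in honest)) => // hx; rewrite Hall ?eqxx.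
    have eqnv : [set j0 in honest | b t j0 c == ~~ v] = set0.
      apply/setP => x; rewrite !inE; case: (boolP (x \in honest)) => // hx.
      by rewrite Hall //; case: (v).
    have u1 := @cnt_ub _ _ honest _ _ c (~~ v) (fun j hj => hrecv t k j hk hj).
    have l1 := @cnt_lb _ _ honest _ _ c v (fun j hj => hrecv t k j hk hj).
    rewrite eqnv cards0 in u1; rewrite eqv in l1.
    have s1 : supermaj n (count_recv (recv t k) c v) by rewrite /supermaj; lia.
    have s2 : supermaj n (count_recv (recv t k) c (~~ v)) = false
      by rewrite /supermaj; apply/negbTE; rewrite -leqNgt; lia.
    have := hupd t k c hk; rewrite /mbba_update.
    case: (f t k c); first by case=> -> _; apply: Hall.
    clearbody v.
    by case: (t %% 3) => [|[|r]]; case: (v) s1 s2 => /= s1 s2; rewrite ?s1 ?s2; case.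
  - rewrite negb_exists => /forallP Hno.
    have fF : forall k, k \in honest -> f t k c = false.
      by move=> k hk; have := Hno k; rewrite hk /= => /negbTE.
    have := hupd t i c hi; rewrite /mbba_update (fF i hi) fi1.
    have gen : forall w, supermaj n (count_recv (recv t i) c w) ->
       forall k, k \in honest -> supermaj n (count_recv (recv t k) c (~~ w)) = false.
      move=> w sw k hk.
      have u1 := @cnt_ub _ _ honest _ _ c w (fun j hj => hrecv t i j hi hj).
      have u2 := @cnt_ub _ _ honest _ _ c (~~ w) (fun j hj => hrecv t k j hk hj).
      have sp := @split_honest _ _ honest (b t) c w.
      move: sw; rewrite /supermaj => sw.
      apply/negbTE; rewrite -leqNgt; lia.
    case Ht: (t %% 3) => [|[|r]].
    + case: ifP => s0; last by case: ifP => _ [].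
      exists false => k hk.
      have := hupd t k c hk; rewrite /mbba_update (fF k hk).
      rewrite Ht (gen false s0 k hk) /=; by case: ifP => _ [].
    + case: ifP => s0; last by case: ifP => _ [].
      exists true => k hk.
      have := hupd t k c hk; rewrite /mbba_update (fF k hk).
      rewrite Ht (gen true s0 k hk) /=; by case: ifP => _ [].
    + by case.
have P : forall t c j, j \in honest -> f t j c -> forall k, k \in honest -> b t k c = b t j c.
  elim=> [|t IH] c j hj; first by rewrite f0.
  move=> fj k hk.
  have [v Hv] := key t c (IH c) j hj fj.
  by rewrite (Hv k hk) (Hv j hj).
move=> t i c hi _ fi1.
exact: key t c (P t c) i hi (introT idP fi1).
Qed.
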